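(* Let $\alpha\in\mathbb{R}$ be transcendental over $\mathbb{Q}$ and let $K=\mathbb{Q}(\alpha)$. Identify each element of $K$ with the unique rational function $r\in\mathbb{Q}(x)$ such that the element equals $r(\alpha)$, and let $K^+$ be the set of those $r$ with $r(\alpha)>0$. Define $H_+=\{r\in K^+ : r'(\alpha)>0\}$, $H_0=\{r\in K^+ : r'(\alpha)=0\}$, $H_-=\{r\in K^+ : r'(\alpha)<0\}$, where $r'$ is the (formal) derivative of $r$. Then $H_+$, $H_0$, $H_-$ are pairwise disjoint, nonempty, each closed under addition and multiplication, and $K^+=H_+\sqcup H_0\sqcup H_-$. *)

(* Defs.v *)
From HB Require Import structures.
From mathcomp Require Import all_boot all_order all_algebra.
From mathcomp Require Import all_reals.
Set Implicit Arguments. Unset Strict Implicit. Unset Printing Implicit Defensive.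
Import Order.TTheory GRing.Theory Num.Theory.
Local Open Scope ring_scope.

Notation Qx := {fraction {poly rat}}.

Definition transcendental (R : realType) (a : R) : Prop :=
  forall p : {poly rat}, p != 0 -> (map_poly (ratr : rat -> R) p).[a] != 0.

Definition fnum (r : Qx) : {poly rat} := \n_(repr r).
Definition fden (r : Qx) : {poly rat} := \d_(repr r).

Definition feval (R : realType) (a : R) (r : Qx) : R :=
  (map_poly (ratr : rat -> R) (fnum r)).[a] /
  (map_poly (ratr : rat -> R) (fden r)).[a].

Definition fderiv (r : Qx) : Qx :=
  FracField.tofrac ((fnum r)^`() * fden r - fnum r * (fden r)^`()) / FracField.tofrac ((fden r) ^+ 2).

Definition Kpos (R : realType) (a : R) (r : Qx) : Prop := 0 < feval a r.
Definition Hplus (R : realType) (a : R) (r : Qx) : Prop :=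
  Kpos a r /\ 0 < feval a (fderiv r).
Definition Hzero (R : realType) (a : R) (r : Qx) : Prop :=
  Kpos a r /\ feval a (fderiv r) = 0.
Definition Hminus (R : realType) (a : R) (r : Qx) : Prop :=
  Kpos a r /\ feval a (fderiv r) < 0.

Definition closed_add_mul (P : Qx -> Prop) : Prop :=
  (forall r s, P r -> P s -> P (r + s)) /\ (forall r s, P r -> P s -> P (r * s)).

(* Main.v *)
Require Import Defs.
From HB Require Import structures.
From mathcomp Require Import all_boot all_order all_algebra.
From mathcomp Require Import all_reals.
Import Order.TTheory GRing.Theory Num.Theory.
Local Open Scope ring_scope.
Local Notation tf := (@FracField.tofrac _).

Lemma fden_neq0 (r : Qx) : fden r != 0.
Proof. exact: denom_ratioP. Qed.

Lemma fracE (r : Qx) : r = tf (fnum r) / tf (fden r).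
Proof.
have hd : tf (fden r) != 0 by rewrite tofrac_eq0 fden_neq0.
apply: (canRL (mulfK hd)).
rewrite /fnum /fden -{1}[r]reprK; set x := repr r.
unlock FracField.tofrac.
rewrite /GRing.mul /=; apply: etrans (esym (FracField.pi_mul _ _)) _.
apply/eqmodP => /=.
rewrite FracField.equivfE /FracField.mulf !numden_Ratio ?oner_neq0 ?mulf_neq0 ?denom_ratioP ?oner_neq0 //.
by rewrite !mulr1 mulrC.
Qed.
From mathcomp Require Import ring lra.
Section S.
Variables (R : realType) (a : R).
Hypothesis ha : transcendental a.
Definition ev (p : {poly rat}) : R := (map_poly (ratr : rat -> R) p).[a].
Lemma evD p q : ev (p + q) = ev p + ev q.
Proof. by rewrite /ev rmorphD hornerD. Qed.
Lemma evB p q : ev (p - q) = ev p - ev q.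
Proof. by rewrite /ev rmorphB hornerD hornerN. Qed.
Lemma evM p q : ev (p * q) = ev p * ev q.
Proof. by rewrite /ev rmorphM hornerM. Qed.
Lemma evC c : ev c%:P = ratr c.
Proof. by rewrite /ev map_polyC hornerC. Qed.
Lemma evX : ev 'X = a.
Proof. by rewrite /ev map_polyX hornerX. Qed.
Lemma ev_neq0 p : p != 0 -> ev p != 0.
Proof. exact: ha. Qed.

Lemma cross (n d N D : {poly rat}) : d != 0 -> D != 0 -> tf n / tf d = tf N / tf D -> n * D = N * d.
Proof.
move=> hd hD e.
have hd' : tf d != 0 by rewrite (@tofrac_eq0 _ d).
have hD' : tf D != 0 by rewrite (@tofrac_eq0 _ D).
have : tf n * tf D = tf N * tf d.
  apply/eqP; rewrite -(eqr_div _ _ hd' hD'). by rewrite e.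
rewrite -!tofracM => /eqP. by rewrite (@tofrac_eq _ (n * D)) => /eqP.
Qed.
Lemma feval_frac (n d : {poly rat}) : d != 0 -> feval a (tf n / tf d) = ev n / ev d.
Proof.
move=> hd; set r := tf n / tf d.
have e := fracE r.
have := cross _ _ _ _ hd (fden_neq0 r) e => /(congr1 ev); rewrite !evM => h.
rewrite /feval.
change (ev (fnum r) / ev (fden r) = ev n / ev d).
have h1 := ev_neq0 _ hd; have h2 := ev_neq0 _ (fden_neq0 r).
by apply/eqP; rewrite (eqr_div _ _ h2 h1) h.
Qed.
Lemma deriv_frac (n d : {poly rat}) (r : Qx) : d != 0 -> r = tf n / tf d ->
  feval a (fderiv r) = (ev n^`() * ev d - ev n * ev d^`()) / (ev d * ev d).
Proof.
move=> hd er.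
have hD := fden_neq0 r.
rewrite /fderiv feval_frac; last by rewrite expf_neq0.
rewrite expr2 evB !evM.
have e : tf n / tf d = tf (fnum r) / tf (fden r) by rewrite -er -fracE.
have h := cross _ _ _ _ hd hD e.
have h' := congr1 (@deriv _) h; rewrite !derivM in h'.
move: (congr1 ev h) (congr1 ev h'); rewrite !evD !evM.
have h1 := ev_neq0 _ hd; have h2 := ev_neq0 _ hD.
move: (fnum r) (fden r) h1 h2 => N D h1 h2.
set x := ev n; set y := ev d; set x' := ev n^`(); set y' := ev d^`().
set X := ev N; set Y := ev D; set X' := ev N^`(); set Y' := ev D^`().
move=> k1 k2.
have hN : X = x * Y / y by rewrite k1; field.
have hN' : X' = (x' * Y + x * Y' - X * y') / y by rewrite k2; field.
rewrite hN' hN; field.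
by rewrite h2 h1.
Qed.
Lemma ev1 : ev 1 = 1.
Proof. by rewrite /ev rmorph1 hornerC. Qed.

Lemma frac_add (r s : Qx) : r + s = tf (fnum r * fden s + fnum s * fden r) / tf (fden r * fden s).
Proof.
have er := fracE r; have es := fracE s.
have hr := fden_neq0 r; have hs := fden_neq0 s.
move: (fnum r) (fden r) (fnum s) (fden s) er es hr hs => N D M E -> -> hD hE.
have hD' : tf D != 0 by rewrite (@tofrac_eq0 _ D).
have hE' : tf E != 0 by rewrite (@tofrac_eq0 _ E).
rewrite (addf_div _ _ hD' hE').
by rewrite tofracD !tofracM.
Qed.
Lemma frac_mul (r s : Qx) : r * s = tf (fnum r * fnum s) / tf (fden r * fden s).
Proof.
have er := fracE r; have es := fracE s.
move: (fnum r) (fden r) (fnum s) (fden s) er es => N D M E -> ->.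
by rewrite mulf_div !tofracM.
Qed.

Definition F r := feval a r.
Definition G r := feval a (fderiv r).

Lemma FE r : F r = ev (fnum r) / ev (fden r).
Proof. by []. Qed.
Lemma GE r : G r = (ev (fnum r)^`() * ev (fden r) - ev (fnum r) * ev (fden r)^`()) / (ev (fden r) * ev (fden r)).
Proof. exact: deriv_frac (fden_neq0 r) (fracE r). Qed.

Lemma F_add r s : F (r + s) = F r + F s.
Proof.
have hr := ev_neq0 _ (fden_neq0 r); have hs := ev_neq0 _ (fden_neq0 s).
rewrite /F {1}frac_add feval_frac ?mulf_neq0 ?fden_neq0 // -/(F r) -/(F s) !FE.
rewrite evD !evM. field. by rewrite hr hs.
Qed.

Lemma F_mul r s : F (r * s) = F r * F s.
Proof.
have hr := ev_neq0 _ (fden_neq0 r); have hs := ev_neq0 _ (fden_neq0 s).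
rewrite /F {1}frac_mul feval_frac ?mulf_neq0 ?fden_neq0 // -/(F r) -/(F s) !FE.
rewrite !evM. field. by rewrite hr hs.
Qed.

Lemma G_add r s : G (r + s) = G r + G s.
Proof.
have hr := ev_neq0 _ (fden_neq0 r); have hs := ev_neq0 _ (fden_neq0 s).
rewrite /G (deriv_frac _ _ (r + s) _ (frac_add r s)) ?mulf_neq0 ?fden_neq0 //.
rewrite -/(G r) -/(G s) !GE.
rewrite !derivD !derivM !evD !evM. field. by rewrite hr hs.
Qed.

Lemma G_mul r s : G (r * s) = G r * F s + F r * G s.
Proof.
have hr := ev_neq0 _ (fden_neq0 r); have hs := ev_neq0 _ (fden_neq0 s).
rewrite /G (deriv_frac _ _ (r * s) _ (frac_mul r s)) ?mulf_neq0 ?fden_neq0 //.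
rewrite -/(G r) -/(G s) !GE !FE.
rewrite !derivM !evD !evM. field. by rewrite hr hs.
Qed.
Lemma ev0 : ev 0 = 0.
Proof. by rewrite /ev rmorph0 horner0. Qed.

Lemma witness (p : {poly rat}) : 
  F (tf p / tf 1) = ev p /\ G (tf p / tf 1) = ev p^`().
Proof.
split; first by rewrite /F feval_frac ?oner_neq0 // ev1 divr1.
rewrite /G (deriv_frac _ _ _ (oner_neq0 _) (erefl _)).
by rewrite derivC ev0 ev1 !mulr1 mulr0 subr0 divr1.
Qed.

Lemma main :
  (forall r, ~ (Hplus a r /\ Hzero a r)) /\
  (forall r, ~ (Hplus a r /\ Hminus a r)) /\
  (forall r, ~ (Hzero a r /\ Hminus a r)) /\
  (exists r, Hplus a r) /\ (exists r, Hzero a r) /\ (exists r, Hminus a r) /\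
  closed_add_mul (Hplus a) /\ closed_add_mul (Hzero a) /\ closed_add_mul (Hminus a) /\
  (forall r, Kpos a r <-> (Hplus a r \/ Hzero a r \/ Hminus a r)).
Proof.
have Kp r : Kpos a r <-> 0 < F r by [].
have Hp r : Hplus a r <-> 0 < F r /\ 0 < G r by [].
have H0 r : Hzero a r <-> 0 < F r /\ G r = 0 by [].
have Hm r : Hminus a r <-> 0 < F r /\ G r < 0 by [].
have [k hk] : exists k : nat, `|a| < k%:R.
  exists (Num.Def.archi_bound `|a|); exact: archi_boundP.
have hk1 : - a < k%:R by have := ler_norm (- a); rewrite normrN; lra.
have hk2 : a < k%:R by have := ler_norm a; lra.
split; first by move=> r [/Hp ? /H0 ?]; lra.
split; first by move=> r [/Hp ? /Hm ?]; lra.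
split; first by move=> r [/H0 ? /Hm ?]; lra.
split.
  exists (tf ('X + (k%:R)%:P) / tf 1); apply/Hp.
  have [-> ->] := witness ('X + (k%:R)%:P).
  rewrite derivD derivX derivC addr0 ev1 evD evX evC ratr_nat; split; lra.
split.
  exists (tf 1 / tf 1); apply/H0.
  have [-> ->] := witness 1.
  rewrite derivC ev0 ev1; split; lra.
split.
  exists (tf ((k%:R)%:P - 'X) / tf 1); apply/Hm.
  have [-> ->] := witness ((k%:R)%:P - 'X).
  rewrite derivB derivX derivC sub0r evB evX evC ratr_nat; rewrite /ev rmorphN hornerN -/(ev 1) ev1; split; lra.
split.
  split=> r s /Hp [? ?] /Hp [? ?]; apply/Hp;
    rewrite ?F_add ?G_add ?F_mul ?G_mul; split; nra.
split.
  split=> r s /H0 [? ?] /H0 [? ?]; apply/H0;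
    rewrite ?F_add ?G_add ?F_mul ?G_mul; split; nra.
split.
  split=> r s /Hm [? ?] /Hm [? ?]; apply/Hm;
    rewrite ?F_add ?G_add ?F_mul ?G_mul; split; nra.
move=> r; rewrite Kp Hp H0 Hm; split.
  by move=> h; case: (ltrgtP (G r) 0) => ?; [right; right|left|right; left].
by case=> [[]|[[]|[]]].
Qed.
End S.

Theorem proposition2p1 (R : realType) (a : R) (ha : transcendental a) :
  (* pairwise disjoint *)
  (forall r, ~ (Hplus a r /\ Hzero a r)) /\
  (forall r, ~ (Hplus a r /\ Hminus a r)) /\
  (forall r, ~ (Hzero a r /\ Hminus a r)) /\
  (* nonempty *)
  (exists r, Hplus a r) /\ (exists r, Hzero a r) /\ (exists r, Hminus a r) /\
  (* closed under addition and multiplication *)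
  closed_add_mul (Hplus a) /\ closed_add_mul (Hzero a) /\ closed_add_mul (Hminus a) /\
  (* K^+ is the union *)
  (forall r, Kpos a r <-> (Hplus a r \/ Hzero a r \/ Hminus a r)).
Proof. exact: main ha. Qed.
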